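(* Let $L>0$, let $P\in H^2(0,L)$ be real-valued with $P(x)\ge P^0>0$ on $[0,L]$, and let $\theta_1,\dots,\theta_4\in\mathbb R$. Suppose there are constants $a,b>0$ with $(a+b-1)^2<4ab$ such that $\theta_1=\theta_3/b-a$, $\theta_2=\theta_4/b$, and suppose $\theta_1,\theta_3<0$, $\theta_2,\theta_4>0$. Let $\mathcal H=\{(w,v,\xi,\psi): w\in H^2(0,L),\ v\in H^1(0,L),\ \xi=v(L),\ \psi=v(0)\}$, $F[w,v]=\theta_1v(0)+\theta_2v'(0)+\theta_3w(0)+\theta_4w'(0)$, and $A(w,v,\xi,\psi)=(v,(Pw')',-w'(L),F[w,v])$ with domain $$D(A)=\{(w,v,\xi,\psi): w\in H^3(0,L),\ v\in H^2(0,L),\ \xi=v(L),\ \psi=v(0),\ (Pw')'(L)=-w'(L),\ (Pw')'(0)=F[w,v]\}.$$ Set $\alpha_1=\theta_2/(2P(0))$, $\alpha_2=-\theta_2\theta_3/(2\theta_4)$, and for $\gamma>0$ equip $\mathcal H$ with the inner product $$\begin{aligned}\langle z_1,z_2\rangle_{\mathcal H}:={}&\alpha_1\int_0^L\big[\gamma (Pw_1')'(P\bar w_2')'+Pw_1'\bar w_2'\big]\,dx+\alpha_1\gamma P(L)w_1'(L)\bar w_2'(L)+\alpha_2 w_1(0)\bar w_2(0)\\&+\alpha_1\int_0^L\big(\gamma P v_1'\bar v_2'+v_1\bar v_2\big)\,dx+\alpha_1P(L)\xi_1\bar\xi_2+\alpha_2\gamma\psi_1\bar\psi_2\\&+\tfrac12\big(\psi_1-2\alpha_1P(0)w_1'(0)+2\alpha_2w_1(0)\big)\big(\bar\psi_2-2\alpha_1P(0)\bar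 w_2'(0)+2\alpha_2\bar w_2(0)\big).\end{aligned}$$ Then for all sufficiently small $\gamma>0$ the operator $A$ is dissipative with respect to $\langle\cdot,\cdot\rangle_{\mathcal H}$, i.e. $\operatorname{Re}\langle z,Az\rangle_{\mathcal H}\le0$ for all $z\in D(A)$.
   Context: Prime denotes $d/dx$; functions are complex-valued and a bar denotes complex conjugation. *)

(* Defs.v *)
From HB Require Import structures.
From mathcomp Require Import all_boot all_order all_algebra.
From mathcomp Require Import all_classical all_reals all_analysis.
From mathcomp Require Import complex.
Import Order.TTheory GRing.Theory Num.Theory.

Set Implicit Arguments.
Unset Strict Implicit.
Unset Printing Implicit Defensive.

Local Open Scope ring_scope.
Local Open Scope classical_set_scope.
Local Open Scope complex_scope.

Section Defs.
Variable R : realType.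

Definition cRe (z : R[i]) : R := complex.Re z.
Definition cIm (z : R[i]) : R := complex.Im z.

Definition rint (a b : R) (f : R -> R) : R :=
  Rintegral lebesgue_measure `[a, b] f.

Definition cint (a b : R) (f : R -> R[i]) : R[i] :=
  complex.Complex (rint a b (fun x => cRe (f x))) (rint a b (fun x => cIm (f x))).

Definition L2 (L : R) (f : R -> R) : Prop :=
  measurable_fun `[0, L] f /\
  lebesgue_measure.-integrable `[0, L] (fun x => ((f x) ^+ 2)%:E).

(* Sobolev space H^k(0,L) for real functions, in the one–dimensional
   characterisation: d j is the (continuous representative of the) j-th weak
   derivative of f on [0,L]; d j is absolutely continuous with derivative
   d (j+1) for j < k (i.e. d j x = d j 0 + \int_0^x d (j+1)), and the top
   derivative d k lies in L^2(0,L).  f coincides with d 0 on [0,L]. *)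
Definition rsob (k : nat) (L : R) (f : R -> R) (d : nat -> R -> R) : Prop :=
  (forall x, 0 <= x <= L -> d 0%N x = f x) /\
  (forall j, (j < k)%N -> forall x, 0 <= x <= L ->
     d j x = d j 0 + rint 0 x (d j.+1)) /\
  L2 L (d k).

Definition csob (k : nat) (L : R) (f : R -> R[i]) (d : nat -> R -> R[i]) : Prop :=
  rsob k L (fun x => cRe (f x)) (fun j x => cRe (d j x)) /\
  rsob k L (fun x => cIm (f x)) (fun j x => cIm (d j x)).

(* (P f')' computed from derivative data (product rule):
   P' f' + P f''. *)
Definition PD (P : R -> R) (dP : nat -> R -> R) (df : nat -> R -> R[i]) (x : R) : R[i] :=
  (dP 1%N x)%:C * df 1%N x + (P x)%:C * df 2%N x.

Definition ipH (L : R) (P : R -> R) (dP : nat -> R -> R) (al1 al2 gam : R)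
  (w1 : R -> R[i]) (dw1 : nat -> R -> R[i]) (v1 : R -> R[i]) (dv1 : nat -> R -> R[i])
  (xi1 psi1 : R[i])
  (w2 : R -> R[i]) (dw2 : nat -> R -> R[i]) (v2 : R -> R[i]) (dv2 : nat -> R -> R[i])
  (xi2 psi2 : R[i]) : R[i] :=
  al1%:C * cint 0 L (fun x => gam%:C * PD P dP dw1 x * (PD P dP dw2 x)^*
                              + (P x)%:C * dw1 1%N x * (dw2 1%N x)^*)
  + (al1 * gam * P L)%:C * dw1 1%N L * (dw2 1%N L)^*
  + al2%:C * w1 0 * (w2 0)^*
  + al1%:C * cint 0 L (fun x => (gam * P x)%:C * dv1 1%N x * (dv2 1%N x)^*
                              + v1 x * (v2 x)^*)
  + (al1 * P L)%:C * xi1 * xi2^*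
  + (al2 * gam)%:C * psi1 * psi2^*
  + (2^-1 : R)%:C *
      (psi1 - (2 * al1 * P 0)%:C * dw1 1%N 0 + (2 * al2)%:C * w1 0)
      * (psi2 - (2 * al1 * P 0)%:C * dw2 1%N 0 + (2 * al2)%:C * w2 0)^*.

Definition Fbc (th1 th2 th3 th4 : R) (w : R -> R[i]) (dw : nat -> R -> R[i])
  (v : R -> R[i]) (dv : nat -> R -> R[i]) : R[i] :=
  th1%:C * v 0 + th2%:C * dv 1%N 0 + th3%:C * w 0 + th4%:C * dw 1%N 0.

End Defs.

(* Main.v *)
Require Import Defs.
From HB Require Import structures.
From mathcomp Require Import all_boot all_order all_algebra.
From mathcomp Require Import all_classical all_reals all_analysis.
From mathcomp Require Import complex.
From mathcomp Require Import measurable_realfun.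
From mathcomp Require Import ring lra.
Import Order.TTheory GRing.Theory Num.Theory.

Module Helpers.
Import numFieldNormedType.Exports.
Local Open Scope classical_set_scope.
Local Open Scope ring_scope.

Section S.
Context {R : realType}.
Notation mu := (@lebesgue_measure R).

Lemma meas_of_int {D : set R} {f : R -> R} :
  mu.-integrable D (EFin \o f) -> measurable_fun D f.
Proof. by move=> i; apply/measurable_EFinP; exact: (measurable_int _ i). Qed.

Lemma int_if (w : R -> R) (b : R -> bool) :
  measurable_fun setT b ->
  mu.-integrable setT (EFin \o w) ->
  mu.-integrable setT (EFin \o (fun y => if b y then w y else 0)).
Proof.
move=> mb iw; apply: (le_integrable measurableT _ _ iw) => //.
  apply/measurable_EFinP/measurable_fun_ifT => //.
  exact: meas_of_int iw.
by move=> y _ /=; case: ifP => _; rewrite ?lexx ?normr0 ?lee_fin //.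
Qed.

Lemma int_EFin (D : set R) (f : R -> R) : measurable D ->
  mu.-integrable D (EFin \o f) ->
  (\int[mu]_(x in D) (f x)%:E)%E = (\int[mu]_(x in D) f x)%:E.
Proof.
move=> mD i; rewrite /Rintegral fineK //; exact: integrable_fin_num.
Qed.

Lemma fubini_core (u w : R -> R) :
  mu.-integrable setT (EFin \o u) -> mu.-integrable setT (EFin \o w) ->
  \int[mu]_x (u x * \int[mu]_y (if y < x then w y else 0)) =
  \int[mu]_y (w y * \int[mu]_x (if y < x then u x else 0)).
Proof.
move=> iu iw.
have mu_ := meas_of_int iu; have mw := meas_of_int iw.
pose h (z : R * R) := ((if z.2 < z.1 then u z.1 * w z.2 else 0)%:E).
have mh : measurable_fun setT h.
  apply/measurable_EFinP/measurable_fun_ifT.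
  - apply: measurable_fun_ltr; [exact: measurable_snd | exact: measurable_fst].
  - apply: measurable_funM; [exact: measurableT_comp mu_ measurable_fst|].
    exact: measurableT_comp mw measurable_snd.
  - exact: measurable_cst.
have mp : measurable_fun setT (fun z : R * R => (u z.1 * w z.2)%:E).
  apply/measurable_EFinP; apply: measurable_funM.
    exact: measurableT_comp mu_ measurable_fst.
  exact: measurableT_comp mw measurable_snd.
have ip : (mu \x mu)%E.-integrable setT (fun z : R * R => (u z.1 * w z.2)%:E).
  apply/integrable12ltyP => //.
  under eq_integral do under eq_integral do rewrite /= normrM EFinM.
  have E x : (\int[mu]_y (`|u x|%:E * `|w y|%:E) = `|u x|%:E * \int[mu]_y `|w y|%:E)%E.
    rewrite ge0_integralZl//.
      by apply/measurable_EFinP; apply: measurableT_comp.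
  under eq_integral do rewrite E.
  rewrite ge0_integralZr//; last 2 first.
  - by apply/measurable_EFinP; apply: measurableT_comp.
  - by apply: integral_ge0.
  apply: lte_mul_pinfty.
  - by apply: integral_ge0.
  - rewrite ge0_fin_numE; first by case/integrableP: iu.
    by apply: integral_ge0.
  - by case/integrableP: iw.
have ih : (mu \x mu)%E.-integrable setT h.
  apply: (@le_integrable _ _ _ (mu \x mu)%E _ measurableT _ _ mh _ ip) => z _ /=.

  by case: ifP => _; rewrite ?normr0 ?lee_fin.
have F := Fubini ih.
have E1 x : (\int[mu]_y h (x, y) = (u x * \int[mu]_y (if y < x then w y else 0))%:E)%E.
  have mb : measurable_fun setT (fun y : R => y < x).
    by apply: measurable_fun_ltr => //; exact: measurable_cst.
  transitivity (\int[mu]_y ((u x)%:E * (EFin \o (fun y => if (y < x)%R then w y else 0%R)) y))%E.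
    by apply: eq_integral => y _ /=; rewrite /h/=; case: ifP => _; rewrite ?mule0 ?EFinM.
  rewrite integralZl//; last exact: int_if.
  by rewrite int_EFin//; exact: int_if.
have E2 y : (\int[mu]_x h (x, y) = (w y * \int[mu]_x (if y < x then u x else 0))%:E)%E.
  have mb : measurable_fun setT (fun x : R => y < x).
    by apply: measurable_fun_ltr => //; exact: measurable_cst.
  transitivity (\int[mu]_x ((w y)%:E * (EFin \o (fun x => if (y < x)%R then u x else 0%R)) x))%E.
    by apply: eq_integral => x _ /=; rewrite /h/=; case: ifP => _; rewrite ?mule0 // mulrC EFinM.
  rewrite integralZl//; last exact: int_if.
  by rewrite int_EFin//; exact: int_if.
have RE (f : R -> R) : \int[mu]_x f x = fine (\int[mu]_x (f x)%:E)%E by [].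
rewrite RE [RHS]RE.
transitivity (fine (\int[mu]_x \int[mu]_y h (x, y))%E).
  by congr fine; apply: eq_integral => x _; rewrite E1.
by rewrite F; congr fine; apply: eq_integral => y _; rewrite E2.
Qed.

Definition ac (b : R) (F f : R -> R) :=
  mu.-integrable `[0, b] (EFin \o f) /\
  forall x, 0 <= x <= b -> F x = F 0 + \int[mu]_(t in `[0, x]) f t.

Definition bm (b : R) (F : R -> R) :=
  measurable_fun `[0, b] F /\ [bounded F x | x in `[0, b]].

Lemma ac_bm {b F f} : 0 <= b -> ac b F f -> bm b F.
Proof.
move=> b0 [hf hF].
pose Fc x := F 0 + parameterized_integral mu 0 x f.
have cF : {within `[0, b], continuous Fc}.
  have c := parameterized_integral_continuous b0 hf.
  move=> x; apply: cvgD; [exact: cvg_cst | exact: c].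
have eF : {in (`[0, b]%classic : set R), Fc =1 F}.
  move=> x; rewrite inE /= => xb; rewrite hF //.

split.
  have m1 := subspace_continuous_measurable_fun (measurable_itv _) cF.
  have := eq_measurable_fun Fc eF m1.
  exact.
have := compact_bounded (continuous_compact cF (@segment_compact _ 0 b)).
move=> [M0 [M0r HM0]]; exists M0; split => // M HM x xb.
rewrite /= -eF; last by rewrite inE.
by apply: (HM0 M HM); exists x.
Qed.

Lemma bm_int b F g : bm b F -> mu.-integrable `[0, b] (EFin \o g) ->
  mu.-integrable `[0, b] (EFin \o (fun x => F x * g x)).
Proof.
move=> [mF bF] ig.
have := @integrableMr _ _ _ mu _ (measurable_itv _) F _ mF bF ig.
by apply: eq_integrable => //= x _; rewrite EFinM.
Qed.

Lemma int_if_set1 (gb : R -> R) y :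
  mu.-integrable setT (EFin \o gb) ->
  mu.-integrable setT (EFin \o (fun x => if y < x then gb x else 0)) /\
  mu.-integrable setT (EFin \o (fun x => if x <= y then gb x else 0)).
Proof.
move=> ig; split; apply: int_if => //.
  by apply: measurable_fun_ltr => //; exact: measurable_cst.
by apply: measurable_fun_ler => //; exact: measurable_cst.
Qed.

Lemma ibp b F G f g : 0 <= b -> ac b F f -> ac b G g ->
  \int[mu]_(x in `[0, b]) (F x * g x + f x * G x) = F b * G b - F 0 * G 0.
Proof.
move=> b0 acF acG.
have bmF := ac_bm b0 acF; have bmG := ac_bm b0 acG.
case: acF => hf hF; case: acG => hg hG.
have mD : measurable (`[0, b]%classic : set R) by exact: measurable_itv.
pose fb := f \_ `[0, b]; pose gb := g \_ `[0, b].
have ifb : mu.-integrable setT (EFin \o fb).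
  by rewrite /fb -restrict_EFin; apply/(@integrable_mkcond _ _ _ mu _ (EFin \o _) (measurable_itv _)).
have igb : mu.-integrable setT (EFin \o gb).
  by rewrite /gb -restrict_EFin; apply/(@integrable_mkcond _ _ _ mu _ (EFin \o _) (measurable_itv _)).
have IA x : 0 <= x <= b ->
    \int[mu]_(t in `[0, x]) f t = \int[mu]_y (if y < x then fb y else 0).
  move=> /andP[x0 xb].
  rewrite -Rintegral_itv_bndo_bndc; last first.
    apply: integrableS hf => //; apply: subset_itvl; rewrite bnd_simp //.
  rewrite Rintegral_mkcond; apply: eq_Rintegral => y _.
  rewrite /fb !patchE !mem_setE !in_itv /=.
  case: (ltP y x) => yx; case: (leP 0 y) => y0 /=; rewrite ?andbF /=.
  - by rewrite (ltW (lt_le_trans yx xb)).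
  1-3: reflexivity.
have IB x : 0 <= x <= b ->
    \int[mu]_(t in `[0, x]) g t = \int[mu]_y (if y <= x then gb y else 0).
  move=> /andP[x0 xb].
  rewrite Rintegral_mkcond; apply: eq_Rintegral => y _.
  rewrite /gb !patchE !mem_setE !in_itv /=.
  case: (leP y x) => yx; case: (leP 0 y) => y0 /=; rewrite ?andbF /=.
  - by rewrite (le_trans yx xb).
  1-3: reflexivity.
have FC := fubini_core _ _ igb ifb.
have JD y : \int[mu]_x (if y < x then gb x else 0) =
    \int[mu]_x gb x - \int[mu]_x (if x <= y then gb x else 0).
  have [i1 i2] := int_if_set1 _ y igb.
  rewrite -RintegralB //; apply: eq_Rintegral => x _.
  by rewrite leNgt; case: ifP => _; rewrite ?subr0 ?subrr.
have intFg := bm_int _ _ _ bmF hg.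
have intGf := bm_int _ _ _ bmG hf.
have intg0 : mu.-integrable `[0, b] (EFin \o (fun x => F 0 * g x)).
  have := @integrableZl _ _ _ mu _ (measurable_itv _) (F 0) _ hg.
  by apply: eq_integrable => // x _; rewrite /= EFinM.
have intf0 : mu.-integrable `[0, b] (EFin \o (fun x => G 0 * f x)).
  have := @integrableZl _ _ _ mu _ (measurable_itv _) (G 0) _ hf.
  by apply: eq_integrable => // x _; rewrite /= EFinM.
pose Sf := \int[mu]_(x in `[0, b]) f x.
pose Sg := \int[mu]_(x in `[0, b]) g x.
pose K y := \int[mu]_x (if x <= y then gb x else 0).
have eK y : ((fun x => f x * G x - G 0 * f x) \_ `[0, b]) y = fb y * K y.
  rewrite /fb !patchE; case: ifP => yD; last by rewrite mul0r.
  have yb : 0 <= y <= b by move: yD; rewrite mem_setE in_itv.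
  by rewrite /K -IB // hG //; ring.
have intGf' : mu.-integrable `[0, b] (EFin \o (fun x => f x * G x)).
  by apply: eq_integrable intGf => // x _; rewrite /= mulrC.
have intT2 : mu.-integrable `[0, b] (EFin \o (fun x => f x * G x - G 0 * f x)).
  have := @integrableB _ _ _ mu _ (measurable_itv _) _ _ intGf' intf0.
  by apply: eq_integrable => // x _; rewrite /= EFinB.
have intfK : mu.-integrable setT (EFin \o (fun y => fb y * K y)).
  have : mu.-integrable setT
      (EFin \o ((fun x => f x * G x - G 0 * f x) \_ `[0, b])).
    rewrite -restrict_EFin.
    by apply/(@integrable_mkcond _ _ _ mu _ (EFin \o _) (measurable_itv _)).
  by apply: eq_integrable => // y _; rewrite /= eK.
have T2E : \int[mu]_(x in `[0, b]) (f x * G x - G 0 * f x) =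
    \int[mu]_y (fb y * K y).
  by rewrite Rintegral_mkcond; apply: eq_Rintegral => y _; rewrite eK.
have T1E : \int[mu]_(x in `[0, b]) (F x * g x - F 0 * g x) =
    \int[mu]_x (gb x * \int[mu]_y (if y < x then fb y else 0)).
  rewrite Rintegral_mkcond; apply: eq_Rintegral => x _.
  rewrite /gb !patchE; case: ifP => xD; last by rewrite mul0r.
  have xb : 0 <= x <= b by move: xD; rewrite mem_setE in_itv.
  by rewrite -IA // hF //; ring.
have SfE : \int[mu]_y fb y = Sf by rewrite /Sf [RHS]Rintegral_mkcond.
have SgE : \int[mu]_y gb y = Sg by rewrite /Sg [RHS]Rintegral_mkcond.
have intfS : mu.-integrable setT (EFin \o (fun y => fb y * Sg)).
  have := @integrableZr _ _ _ mu _ measurableT Sg _ ifb.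
  by apply: eq_integrable => // y _; rewrite /= EFinM.
have T1v : \int[mu]_(x in `[0, b]) (F x * g x - F 0 * g x) =
    Sg * Sf - \int[mu]_y (fb y * K y).
  rewrite T1E FC.
  transitivity (\int[mu]_y (fb y * Sg - fb y * K y)).
    by apply: eq_Rintegral => y _; rewrite JD SgE /K mulrBr.
  rewrite RintegralB // RintegralZr //.
  by rewrite SfE mulrC.
have e1 : \int[mu]_(x in `[0, b]) (F x * g x) =
    F 0 * Sg + (Sg * Sf - \int[mu]_y (fb y * K y)).
  by rewrite -T1v RintegralB // RintegralZl // /Sg; ring.
have e2 : \int[mu]_(x in `[0, b]) (f x * G x) =
    G 0 * Sf + \int[mu]_y (fb y * K y).
  by rewrite -T2E RintegralB // RintegralZl // /Sf; ring.
rewrite RintegralD // e1 e2.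
have -> : Sf = F b - F 0.
  by rewrite (hF b) /Sf ?lexx ?b0 //; ring.
have -> : Sg = G b - G 0.
  by rewrite (hG b) /Sg ?lexx ?b0 //; ring.
ring.
Qed.

End S.

Arguments bm_int {R b F g}.
Arguments ibp {R b F G f g}.
Arguments fubini_core {R u w}.
Section S.
Context {R : realType}.
Notation mu := (@lebesgue_measure R).
Lemma int_cst (b : R) (c : R) : mu.-integrable `[0, b] (EFin \o (fun=> c)).
Proof.
apply: continuous_compact_integrable; first exact: segment_compact.
by move=> x; exact: cvg_cst.
Qed.

Lemma bm_integrable {b : R} {F : R -> R} : bm b F -> mu.-integrable `[0, b] (EFin \o F).
Proof.
move=> bF; have := bm_int bF (int_cst b 1).
by apply: eq_integrable => // x _; rewrite /= mulr1.
Qed.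

Lemma ac_int {b : R} {F f : R -> R} : ac b F f -> mu.-integrable `[0, b] (EFin \o f).
Proof. by case. Qed.

Lemma ac_sub {b x : R} {F f : R -> R} : 0 <= x <= b -> ac b F f -> ac x F f.
Proof.
move=> /andP[x0 xb] [hf hF]; split.
  by apply: integrableS hf => //; apply: subset_itvl; rewrite bnd_simp.
move=> y /andP[y0 yx]; apply: hF; rewrite y0 /=; exact: le_trans yx xb.
Qed.

Lemma ac_mul {b : R} {F G f g : R -> R} : 0 <= b -> ac b F f -> ac b G g ->
  ac b (fun x => F x * G x) (fun x => F x * g x + f x * G x).
Proof.
move=> b0 acF acG.
have bmF := ac_bm b0 acF; have bmG := ac_bm b0 acG.
split.
  have i1 := bm_int bmF (ac_int acG).
  have i2 := bm_int bmG (ac_int acF).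
  have := @integrableD _ _ _ mu _ (measurable_itv _) _ _ i1 i2.
  by apply: eq_integrable => // x _; rewrite /= EFinD [G x * _]mulrC.
move=> x xb.
have x0 : 0 <= x by case/andP: xb.
rewrite (ibp x0 (ac_sub xb acF) (ac_sub xb acG)); ring.
Qed.

Lemma ac_eqF {b : R} {F F' f : R -> R} : 0 <= b -> (forall x, 0 <= x <= b -> F x = F' x) ->
  ac b F f -> ac b F' f.
Proof.
move=> b0 e [hf hF]; split => // x xb.
by rewrite -e // -e ?lexx ?b0 //; exact: hF.
Qed.

Lemma ac_eqd {b : R} {F f f' : R -> R} : (forall x, 0 <= x <= b -> f x = f' x) ->
  ac b F f -> ac b F f'.
Proof.
move=> e [hf hF]; split.
  apply: eq_integrable hf => // x; rewrite inE /= in_itv /= => xb.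
  by rewrite /= e.
move=> x /andP[x0 xb]; rewrite hF ?x0 //; congr (_ + _).
apply: eq_Rintegral => y; rewrite inE /= in_itv /= => /andP[y0 yx].
by rewrite e // y0 /=; exact: le_trans yx xb.
Qed.

Lemma ibp2 {b : R} {F G f g : R -> R} : 0 <= b -> ac b F f -> ac b G g ->
  \int[mu]_(x in `[0, b]) (F x * g x) + \int[mu]_(x in `[0, b]) (f x * G x)
    = F b * G b - F 0 * G 0.
Proof.
move=> b0 acF acG.
have bmF := ac_bm b0 acF; have bmG := ac_bm b0 acG.
have i1 := bm_int bmF (ac_int acG).
have i2 : mu.-integrable `[0, b] (EFin \o (fun x => f x * G x)).
  have := bm_int bmG (ac_int acF).
  by apply: eq_integrable => // x _; rewrite /= mulrC.
by rewrite -RintegralD //; exact: ibp.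
Qed.

Lemma L2_int {L : R} {f : R -> R} : L2 L f -> mu.-integrable `[0, L] (EFin \o f).
Proof.
move=> [mf i2].
have i3 : mu.-integrable `[0, L] (EFin \o (fun x => 1 + f x ^+ 2)).
  have := @integrableD _ _ _ mu _ (measurable_itv _) _ _ (int_cst L 1) i2.
  by apply: eq_integrable => // x _; rewrite /= EFinD.
apply: (le_integrable _ _ _ i3) => //.
  by apply/measurable_EFinP.
move=> x _ /=; rewrite lee_fin.
have h : 0 <= f x ^+ 2 by exact: sqr_ge0.
rewrite [X in _ <= X]ger0_norm; last lra.
rewrite -[_ ^+ 2]real_normK ?num_real //.
have : 0 <= `|f x| by exact: normr_ge0.
nra.
Qed.

End S.

Section S2.
Context {R : realType}.
Notation mu := (@lebesgue_measure R).

Lemma rsob_ac {k : nat} {L : R} {f : R -> R} {d : nat -> R -> R} : 0 <= L -> rsob k L f d ->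
  forall j, (j < k)%N -> ac L (d j) (d j.+1).
Proof.
move=> L0 [h0 [hs h2]].
have I : forall m n, (n + m = k)%N -> mu.-integrable `[0, L] (EFin \o d n).
  elim=> [|m IH] n.
    by rewrite addn0 => ->; exact: L2_int h2.
  move=> e.
  have hn : (n < k)%N by rewrite -e addnS ltnS leq_addr.
  have acn : ac L (d n) (d n.+1).
    split; last exact: hs.
    by apply: IH; rewrite addSnnS.
  exact: bm_integrable (ac_bm L0 acn).
move=> j hj; split; last exact: hs.
by apply: (I (k - j.+1)%N); rewrite subnKC.
Qed.

End S2.

Local Open Scope complex_scope.
Section C.
Context {R : realType}.
Notation mu := (@lebesgue_measure R).

Lemma ReD (x y : R[i]) : cRe (x + y) = cRe x + cRe y.
Proof. by case: x => a b; case: y => c d. Qed.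
Lemma ImD (x y : R[i]) : cIm (x + y) = cIm x + cIm y.
Proof. by case: x => a b; case: y => c d. Qed.
Lemma ReN (x : R[i]) : cRe (- x) = - cRe x.
Proof. by case: x. Qed.
Lemma ImN (x : R[i]) : cIm (- x) = - cIm x.
Proof. by case: x. Qed.
Lemma ReB (x y : R[i]) : cRe (x - y) = cRe x - cRe y.
Proof. by case: x => a b; case: y => c d. Qed.
Lemma ImB (x y : R[i]) : cIm (x - y) = cIm x - cIm y.
Proof. by case: x => a b; case: y => c d. Qed.
Lemma ReM (x y : R[i]) : cRe (x * y) = cRe x * cRe y - cIm x * cIm y.
Proof. by case: x => a b; case: y => c d. Qed.
Lemma ImM (x y : R[i]) : cIm (x * y) = cRe x * cIm y + cIm x * cRe y.
Proof. by case: x => a b; case: y => c d. Qed.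
Lemma ReC (c : R) : cRe (c%:C) = c.
Proof. by []. Qed.
Lemma ImC (c : R) : cIm (c%:C) = 0.
Proof. by []. Qed.
Lemma Rec (x : R[i]) : cRe (x^*) = cRe x.
Proof. by case: x. Qed.
Lemma Imc (x : R[i]) : cIm (x^*) = - cIm x.
Proof. by case: x. Qed.
Lemma Recint a b (f : R -> R[i]) : cRe (cint a b f) = rint a b (fun x => cRe (f x)).
Proof. by []. Qed.
Lemma Imcint a b (f : R -> R[i]) : cIm (cint a b f) = rint a b (fun x => cIm (f x)).
Proof. by []. Qed.

Definition cE := (ReD, ImD, ReB, ImB, ReN, ImN, ReM, ImM, ReC, ImC, Rec, Imc, Recint, Imcint).

Local Close Scope complex_scope.
Lemma intD' (b : R) (f g : R -> R) : mu.-integrable `[0, b] (EFin \o f) ->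
  mu.-integrable `[0, b] (EFin \o g) ->
  mu.-integrable `[0, b] (EFin \o (fun x => f x + g x)).
Proof.
move=> i1 i2; have := @integrableD _ _ _ mu _ (measurable_itv _) _ _ i1 i2.
by apply: eq_integrable => // x _; rewrite /= EFinD.
Qed.

Lemma intZ' (b c : R) (f : R -> R) : mu.-integrable `[0, b] (EFin \o f) ->
  mu.-integrable `[0, b] (EFin \o (fun x => c * f x)).
Proof.
move=> i1; have := @integrableZl _ _ _ mu _ (measurable_itv _) c _ i1.
by apply: eq_integrable => // x _; rewrite /= EFinM.
Qed.

Lemma comb4 (b c : R) (h1 h2 h3 h4 : R -> R) :
  mu.-integrable `[0, b] (EFin \o h1) -> mu.-integrable `[0, b] (EFin \o h2) ->
  mu.-integrable `[0, b] (EFin \o h3) -> mu.-integrable `[0, b] (EFin \o h4) ->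
  \int[mu]_(x in `[0, b]) (c * (h1 x + h2 x) + (h3 x + h4 x)) =
  c * (\int[mu]_(x in `[0, b]) h1 x + \int[mu]_(x in `[0, b]) h2 x) +
  (\int[mu]_(x in `[0, b]) h3 x + \int[mu]_(x in `[0, b]) h4 x).
Proof.
move=> i1 i2 i3 i4.
rewrite RintegralD //; last 2 first.
- by apply: intZ'; apply: intD'.
- by apply: intD'.
by rewrite RintegralZl //; [rewrite !RintegralD | apply: intD'].
Qed.

Lemma int_Fg (b : R) (F G f g : R -> R) : 0 <= b -> ac b F f -> ac b G g ->
  mu.-integrable `[0, b] (EFin \o (fun x => F x * g x)).
Proof. by move=> b0 aF aG; exact: bm_int (ac_bm b0 aF) (ac_int aG). Qed.

Lemma int_fG (b : R) (F G f g : R -> R) : 0 <= b -> ac b F f -> ac b G g ->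
  mu.-integrable `[0, b] (EFin \o (fun x => f x * G x)).
Proof.
move=> b0 aF aG; have := bm_int (ac_bm b0 aG) (ac_int aF).
by apply: eq_integrable => // x _; rewrite /= mulrC.
Qed.

End C.

Section K.
Variable R : realFieldType.
Local Close Scope complex_scope.

Lemma quad_neg (a b k v t : R) : 0 < a -> 0 < b ->
  k = (4 * a * b - (a + b - 1) ^+ 2) / (4 * (a + b)) ->
  0 < 4 * a * b - (a + b - 1) ^+ 2 ->
  a * v ^+ 2 - (a + b - 1) * v * t + b * t ^+ 2 >= k * (v ^+ 2 + t ^+ 2).
Proof.
move=> a0 b0 kE D0.
set s := a + b - 1 in kE D0 *.
have ab0 : 0 < 4 * (a + b) by lra.
have ka : k < a.
  rewrite kE ltr_pdivrMr //.
  have : 0 <= s ^+ 2 by exact: sqr_ge0.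
  have : 0 < a * a by exact: mulr_gt0.
  have -> : a * (4 * (a + b)) = 4 * (a * a) + 4 * a * b by ring.

  lra.
have kb : (a - k) * (b - k) * 4 >= s ^+ 2.
  have e : (a - k) * (b - k) * 4 = 4 * a * b - 4 * k * (a + b) + 4 * k ^+ 2.
    by ring.
  have e2 : 4 * k * (a + b) = 4 * a * b - s ^+ 2.
    by rewrite kE /s; field; lra.
  have : 0 <= k ^+ 2 by exact: sqr_ge0.
  lra.
have h1 : 0 <= ((a - k) * v - s / 2 * t) ^+ 2 by exact: sqr_ge0.
have h2 : 0 <= ((a - k) * (b - k) - s ^+ 2 / 4) * t ^+ 2.
  apply: mulr_ge0; last exact: sqr_ge0. lra.
have e3 : (a - k) * (a * v ^+ 2 - s * v * t + b * t ^+ 2 - k * (v ^+ 2 + t ^+ 2))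
   = ((a - k) * v - s / 2 * t) ^+ 2 + ((a - k) * (b - k) - s ^+ 2 / 4) * t ^+ 2.
  by field.
have : 0 <= (a - k) * (a * v ^+ 2 - s * v * t + b * t ^+ 2 - k * (v ^+ 2 + t ^+ 2)).
  rewrite e3; lra.
rewrite pmulr_rge0; last lra.
rewrite /s; lra.
Qed.

Lemma Gbound (al2 th1 th2 b v v' t : R) :
  (th1 * v + b * t + th2 * v') * (al2 * v - th2 / 2 * v') <=
  (`|al2 * th1| + `|al2 * b| + (al2 - th1 / 2) ^+ 2 + b ^+ 2 / 4) * (v ^+ 2 + t ^+ 2).
Proof.
set C := (al2 - th1 / 2) * v - b / 2 * t.
have e : (th1 * v + b * t + th2 * v') * (al2 * v - th2 / 2 * v') =
  al2 * th1 * v ^+ 2 + al2 * b * (v * t) + C ^+ 2 / 2 - (th2 * v' - C) ^+ 2 / 2.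
  by rewrite /C; field.
rewrite e.
have h1 : 0 <= (th2 * v' - C) ^+ 2 by exact: sqr_ge0.
have h2 : C ^+ 2 / 2 <= (al2 - th1 / 2) ^+ 2 * v ^+ 2 + b ^+ 2 / 4 * t ^+ 2.
  have : 0 <= ((al2 - th1 / 2) * v + b / 2 * t) ^+ 2 by exact: sqr_ge0.
  rewrite /C; move=> h; nra.
have h3 : al2 * th1 * v ^+ 2 <= `|al2 * th1| * (v ^+ 2 + t ^+ 2).
  have : al2 * th1 <= `|al2 * th1| by exact: ler_norm.
  have : 0 <= v ^+ 2 by exact: sqr_ge0.
  have : 0 <= t ^+ 2 by exact: sqr_ge0.
  have : 0 <= `|al2 * th1| by exact: normr_ge0.
  nra.
have h4 : al2 * b * (v * t) <= `|al2 * b| * (v ^+ 2 + t ^+ 2).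
  have : `|v * t| <= v ^+ 2 + t ^+ 2.
    rewrite normrM.
    have : 0 <= (`|v| - `|t|) ^+ 2 by exact: sqr_ge0.
    rewrite -[v ^+ 2]real_normK ?num_real // -[t ^+ 2]real_normK ?num_real //.
    have : 0 <= `|v| by exact: normr_ge0.
    have : 0 <= `|t| by exact: normr_ge0.
    nra.
  have : al2 * b * (v * t) <= `|al2 * b * (v * t)| by exact: ler_norm.
  rewrite normrM => h h'.
  have : 0 <= `|al2 * b| by exact: normr_ge0.
  nra.
have h5 : 0 <= v ^+ 2 by exact: sqr_ge0.
have h6 : 0 <= t ^+ 2 by exact: sqr_ge0.
have h7 : 0 <= (al2 - th1 / 2) ^+ 2 * t ^+ 2 by apply: mulr_ge0; exact: sqr_ge0.
have h8 : 0 <= b ^+ 2 / 4 * v ^+ 2.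
  apply: mulr_ge0; last exact: sqr_ge0.
  apply: divr_ge0; [exact: sqr_ge0|lra].
nra.
Qed.

Definition Eexpr (th1 th2 th3 th4 P0v gam v v' w w' : R) :=
  let al1 := th2 / (2 * P0v) in let al2 := - (th2 * th3) / (2 * th4) in
  let F := th1 * v + th2 * v' + th3 * w + th4 * w' in
  al1 * gam * (- P0v * (F * v')) + al1 * (- P0v * (w' * v)) + al2 * (w * v)
  + al2 * gam * (v * F)
  + 2^-1 * ((v - 2 * al1 * P0v * w' + 2 * al2 * w) *
            (F - 2 * al1 * P0v * v' + 2 * al2 * v)).

Lemma key (th1 th2 th3 th4 a b P0v : R) : 0 < a -> 0 < b ->
  (a + b - 1) ^+ 2 < 4 * a * b -> th1 = th3 / b - a -> th2 = th4 / b ->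
  0 < th4 -> 0 < P0v ->
  exists g0, 0 < g0 /\ forall gam, 0 < gam <= g0 -> forall v v' w w',
    Eexpr th1 th2 th3 th4 P0v gam v v' w w' <= 0.
Proof.
move=> a0 b0 hab th1E th2E th40 P00.
set s := a + b - 1.
pose k := (4 * a * b - s ^+ 2) / (4 * (a + b)).
pose al2 := - (th2 * th3) / (2 * th4).
pose M := `|al2 * th1| + `|al2 * b| + (al2 - th1 / 2) ^+ 2 + b ^+ 2 / 4.
have D0 : 0 < 4 * a * b - s ^+ 2 by rewrite /s; lra.
have k0 : 0 < k by rewrite /k; apply: divr_gt0 => //; lra.
have M0 : 0 < M.
  have : 0 < b ^+ 2 / 4 by apply: divr_gt0; [exact: exprn_gt0|lra].
  have : 0 <= `|al2 * th1| by exact: normr_ge0.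
  have : 0 <= `|al2 * b| by exact: normr_ge0.
  have : 0 <= (al2 - th1 / 2) ^+ 2 by exact: sqr_ge0.
  rewrite /M; lra.
exists (k / (2 * M)); split; first by apply: divr_gt0 => //; lra.
move=> gam /andP[g0 gk] v v' w w'.
pose t := th2 * w' + th3 * w / b.
have e : Eexpr th1 th2 th3 th4 P0v gam v v' w w' =
  - 2^-1 * (a * v ^+ 2 - s * v * t + b * t ^+ 2) +
  gam * ((th1 * v + b * t + th2 * v') * (al2 * v - th2 / 2 * v')).
  rewrite /Eexpr /t /al2 /s th1E th2E; field.
  by apply/and3P; split; apply: lt0r_neq0 => //.
rewrite e.
have hq := @quad_neg a b k v t a0 b0 (erefl k) D0.
have hG := Gbound al2 th1 th2 b v v' t.
have hvt : 0 <= v ^+ 2 + t ^+ 2 by apply: addr_ge0; exact: sqr_ge0.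
have hgM : gam * M <= k / 2.
  move: gk; rewrite ler_pdivlMr; last lra.
  lra.
rewrite -/M in hG.
have : gam * ((th1 * v + b * t + th2 * v') * (al2 * v - th2 / 2 * v'))
   <= gam * M * (v ^+ 2 + t ^+ 2).
  rewrite -[gam * M * _]mulrA; apply: ler_wpM2l; [exact: ltW | exact: hG].
have : gam * M * (v ^+ 2 + t ^+ 2) <= k / 2 * (v ^+ 2 + t ^+ 2).
  by apply: ler_wpM2r.
rewrite /s in hq *; nra.
Qed.

End K.

End Helpers.
Import Helpers.

Local Open Scope ring_scope.
Local Open Scope complex_scope.

Arguments comb4 {R b} c {h1 h2 h3 h4}.
Arguments int_Fg {R b F G f g}.
Arguments int_fG {R b F G f g}.
Import Order.TTheory GRing.Theory Num.Theory.
Local Open Scope ring_scope.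
Local Open Scope complex_scope.

Lemma sum_le0 {R : realType} (x y z : R) : x = y + z -> y <= 0 -> z <= 0 -> x <= 0.
Proof. by move=> -> hy hz; rewrite -[0]addr0 lerD. Qed.

Theorem lemma2p9 (R : realType) (L : R) (P : R -> R) (dP : nat -> R -> R) (P0 : R)
  (th1 th2 th3 th4 a b : R) :
  0 < L ->
  rsob 2 L P dP ->
  0 < P0 -> (forall x, 0 <= x <= L -> P0 <= P x) ->
  0 < a -> 0 < b -> (a + b - 1) ^+ 2 < 4 * a * b ->
  th1 = th3 / b - a -> th2 = th4 / b ->
  th1 < 0 -> th3 < 0 -> 0 < th2 -> 0 < th4 ->
  let al1 := th2 / (2 * P 0) in
  let al2 := - (th2 * th3) / (2 * th4) in
  exists gam0 : R, 0 < gam0 /\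
    forall gam : R, 0 < gam <= gam0 ->
    forall (w : R -> R[i]) (dw : nat -> R -> R[i])
           (v : R -> R[i]) (dv : nat -> R -> R[i]),
      (* z = (w, v, v(L), v(0)) in D(A) *)
      csob 3 L w dw -> csob 2 L v dv ->
      PD P dP dw L = - dw 1%N L ->
      PD P dP dw 0 = Fbc th1 th2 th3 th4 w dw v dv ->
      (* dq : derivative data of the H^1 function (P w')' *)
      forall dq : nat -> R -> R[i], csob 1 L (PD P dP dw) dq ->
      (* Re < z, A z >_H <= 0, with A z = (v, (P w')', -w'(L), F[w,v]) *)
      cRe (ipH L P dP al1 al2 gam
             w dw v dv (v L) (v 0)
             v dv (PD P dP dw) dq (- dw 1%N L) (Fbc th1 th2 th3 th4 w dw v dv))
        <= 0.
Proof.
move=> L0 hP P00 hPge a0 b0 hab th1E th2E th1n th3n th2p th4p al1 al2.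
have L0' : 0 <= L by exact: ltW.
have D0 : (0:R) <= 0 <= L by apply/andP; split; [exact: le_refl | exact: L0'].
have DL : 0 <= L <= L by apply/andP; split; [exact: L0' | exact: le_refl].
have P0pos : 0 < P 0 by exact: lt_le_trans P00 (hPge 0 D0).
have [g0 [g0p Hg]] := @key R th1 th2 th3 th4 a b (P 0) a0 b0 hab th1E th2E th4p P0pos.
exists g0; split => // gam hgam w dw v dv [hwr hwi] [hvr hvi] hL h0 dq [hqr hqi].
rewrite /ipH !cE.
have acP : ac L P (dP 1%N).
  by apply: (ac_eqF L0' _ (rsob_ac L0' hP 0 isT)) => x xb; exact: hP.1.
have aWr1 : ac L (fun x => cRe (dw 1%N x)) (fun x => cRe (dw 2%N x)) := rsob_ac L0' hwr 1 isT.
have aWi1 : ac L (fun x => cIm (dw 1%N x)) (fun x => cIm (dw 2%N x)) := rsob_ac L0' hwi 1 isT.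
have aVr0 : ac L (fun x => cRe (dv 0%N x)) (fun x => cRe (dv 1%N x)) := rsob_ac L0' hvr 0 isT.
have aVi0 : ac L (fun x => cIm (dv 0%N x)) (fun x => cIm (dv 1%N x)) := rsob_ac L0' hvi 0 isT.
have aVr1 : ac L (fun x => cRe (dv 1%N x)) (fun x => cRe (dv 2%N x)) := rsob_ac L0' hvr 1 isT.
have aVi1 : ac L (fun x => cIm (dv 1%N x)) (fun x => cIm (dv 2%N x)) := rsob_ac L0' hvi 1 isT.
have aQr : ac L (fun x => cRe (dq 0%N x)) (fun x => cRe (dq 1%N x)) := rsob_ac L0' hqr 0 isT.
have aQi : ac L (fun x => cIm (dq 0%N x)) (fun x => cIm (dq 1%N x)) := rsob_ac L0' hqi 0 isT.
have eqr x : 0 <= x <= L -> cRe (dq 0%N x) = dP 1%N x * cRe (dw 1%N x) + P x * cRe (dw 2%N x).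
  move=> xb; have -> : cRe (dq 0%N x) = cRe (PD P dP dw x) by exact: hqr.1.
  by rewrite /PD !cE; ring.
have eqi x : 0 <= x <= L -> cIm (dq 0%N x) = dP 1%N x * cIm (dw 1%N x) + P x * cIm (dw 2%N x).
  move=> xb; have -> : cIm (dq 0%N x) = cIm (PD P dP dw x) by exact: hqi.1.
  by rewrite /PD !cE; ring.
have aAr := ac_mul L0' acP aVr1.
have aAi := ac_mul L0' acP aVi1.
have aBr : ac L (fun x => P x * cRe (dw 1%N x)) (fun x => cRe (dq 0%N x)).
  by apply: (ac_eqd _ (ac_mul L0' acP aWr1)) => x xb /=; rewrite eqr //; ring.
have aBi : ac L (fun x => P x * cIm (dw 1%N x)) (fun x => cIm (dq 0%N x)).
  by apply: (ac_eqd _ (ac_mul L0' acP aWi1)) => x xb /=; rewrite eqi //; ring.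
have H1 : rint 0 L (fun x => cRe (gam%:C * PD P dP dw x * (PD P dP dv x)^* +
        (P x)%:C * dw 1%N x * (dv 1%N x)^*)) =
  gam * (\int[lebesgue_measure]_(x in `[0, L]) (cRe (dq 0%N x) * (P x * cRe (dv 2%N x) + dP 1%N x * cRe (dv 1%N x)))
       + \int[lebesgue_measure]_(x in `[0, L]) (cIm (dq 0%N x) * (P x * cIm (dv 2%N x) + dP 1%N x * cIm (dv 1%N x))))
  + (\int[lebesgue_measure]_(x in `[0, L]) (P x * cRe (dw 1%N x) * cRe (dv 1%N x))
     + \int[lebesgue_measure]_(x in `[0, L]) (P x * cIm (dw 1%N x) * cIm (dv 1%N x))).
  rewrite /rint -(comb4 gam (int_Fg L0' aQr aAr) (int_Fg L0' aQi aAi)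
     (int_Fg L0' aBr aVr0) (int_Fg L0' aBi aVi0)).
  apply: eq_Rintegral => x; rewrite inE /= in_itv /= => xb.
  by rewrite /PD !cE eqr // eqi //; ring.
have H4 : rint 0 L (fun x => cRe ((gam * P x)%:C * dv 1%N x * (dq 1%N x)^* +
         v x * (PD P dP dw x)^*)) =
  gam * (\int[lebesgue_measure]_(x in `[0, L]) (cRe (dq 1%N x) * (P x * cRe (dv 1%N x)))
       + \int[lebesgue_measure]_(x in `[0, L]) (cIm (dq 1%N x) * (P x * cIm (dv 1%N x))))
  + (\int[lebesgue_measure]_(x in `[0, L]) (cRe (dq 0%N x) * cRe (dv 0%N x))
     + \int[lebesgue_measure]_(x in `[0, L]) (cIm (dq 0%N x) * cIm (dv 0%N x))).
  rewrite /rint -(comb4 gam (int_fG L0' aQr aAr) (int_fG L0' aQi aAi)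
     (int_fG L0' aBr aVr0) (int_fG L0' aBi aVi0)).
  apply: eq_Rintegral => x; rewrite inE /= in_itv /= => xb.
  have evr : cRe (v x) = cRe (dv 0%N x) by symmetry; exact: hvr.1.
  have evi : cIm (v x) = cIm (dv 0%N x) by symmetry; exact: hvi.1.
  by rewrite /PD !cE evr evi eqr // eqi //; ring.
rewrite H1 H4.
rewrite (canRL (addrK _) (ibp2 L0' aQr aAr)).
rewrite (canRL (addrK _) (ibp2 L0' aQi aAi)).
rewrite (canRL (addrK _) (ibp2 L0' aBr aVr0)).
rewrite (canRL (addrK _) (ibp2 L0' aBi aVi0)).
cbv beta.
have bqrL : cRe (dq 0%N L) = - cRe (dw 1%N L).
  by rewrite (hqr.1 L DL) hL !cE.
have bqiL : cIm (dq 0%N L) = - cIm (dw 1%N L).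
  by rewrite (hqi.1 L DL) hL !cE.
have bqr0 : cRe (dq 0%N 0) = cRe (Fbc th1 th2 th3 th4 w dw v dv).
  by rewrite (hqr.1 0 D0) h0.
have bqi0 : cIm (dq 0%N 0) = cIm (Fbc th1 th2 th3 th4 w dw v dv).
  by rewrite (hqi.1 0 D0) h0.
have bvrL : cRe (dv 0%N L) = cRe (v L) by exact: hvr.1.
have bviL : cIm (dv 0%N L) = cIm (v L) by exact: hvi.1.
have bvr0 : cRe (dv 0%N 0) = cRe (v 0) by exact: hvr.1.
have bvi0 : cIm (dv 0%N 0) = cIm (v 0) by exact: hvi.1.
rewrite bqrL bqiL bqr0 bqi0 bvrL bviL bvr0 bvi0 /Fbc !cE.
apply: (sum_le0 _ _ _ _ (Hg gam hgam (cRe (v 0)) (cRe (dv 1%N 0)) (cRe (w 0)) (cRe (dw 1%N 0)))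
                  (Hg gam hgam (cIm (v 0)) (cIm (dv 1%N 0)) (cIm (w 0)) (cIm (dw 1%N 0)))).
rewrite /Eexpr /al1 /al2.
Show.
ring.
Qed.
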